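(* Let $n\ge3$ be odd, $M\in\mathcal S^{n\times n}$ distinguished, and $S$ a spin$^c$ set for $M$. If $J_M(U)\ne\emptyset$ for every $U\subseteq S$ with $|U|=3$, then there exists $g\in G_n$ such that $(gM,gS)$ is a spin$^c$ pair in standard form.
   Context: $\mathcal S=\{0,1,2,3\}$ is the Klein four-group ($\mathbb Z_2$-vector space) with $x+x=0$, $1+2=3$, $1+3=2$, $2+3=1$; conjugation is the involution $\bar0=0,\bar1=1,\bar2=3,\bar3=2$. $\mathcal P_n$ is the power set of $\{1,\dots,n\}$ (addition = symmetric difference); $|U|_2=|U|\bmod2$; $J_M(U)=\{j:\sum_{i\in U}M_{ij}=1\}$; $r_i^S(M)=\sum_{j\in S}M_{ij}$. $S$ is a spin$^c$ set for $M$ (and $(M,S)$ a spin$^c$ pair) if $|(J_M(U)+U)\cap S|_2=\binom{|U|}2\bmod 2$ for all $U\in\mathcal P_n$. A square matrix is distinguished if it has $1$ on the diagonal and $2$ or $3$ off it; self-conjugate if $A^t=\overline A$. $G_n=C_2\wr S_n$ acts on $\mathcal S^{n\times n}$ ($k$-th generator of $C_2^n$ conjugates column $k$; $\sigma\in S_n$ acts by $P_\sigma MP_\sigma^{-1}$) and on $\mathcal P_n$ via $G_n\to S_n$. A spin$^c$ pair $(M,S)$ is in standard form if: (i) $S=\{1,\dots,|S|\}$; (ii) the first row of $M$ is $[1,2,\dots,2]$; (iii) $M$ is distinguished with block form $\begin{bmatrix}A&2&*\\2&B&*\\ *&*&*\end{bmatrix}$, diagonal blocks of degrees $k,l,r$,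 the blocks marked $2$ having all entries $2$; (iv) $k\ge l$, $k+l=|S|$; (v) $A,B$ self-conjugate; (vi) $r_1^S(M)=\dots=r_k^S(M)\ne r_{k+1}^S(M)=\dots=r_{k+l}^S(M)$ (possibly $l=0$). *)

(* Defs.v *)
From mathcomp Require Import all_boot all_order all_algebra all_fingroup.
Set Implicit Arguments. Unset Strict Implicit. Unset Printing Implicit Defensive.

(* The Klein four-group S = {0,1,2,3}, represented by 'I_4 with bitwise xor. *)
Definition KS := 'I_4.
Definition k0 : KS := @Ordinal 4 0 isT.
Definition k1 : KS := @Ordinal 4 1 isT.
Definition k2 : KS := @Ordinal 4 2 isT.
Definition k3 : KS := @Ordinal 4 3 isT.

(* bitwise xor of the two low bits *)
Definition kaddn (a b : nat) : nat :=
  (odd a (+) odd b) + 2 * (odd a./2 (+) odd b./2).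
Definition kadd (x y : KS) : KS := inord (kaddn x y).
Definition ksum (s : seq KS) : KS := foldr kadd k0 s.

Definition kconj (x : KS) : KS :=
  if x == k2 then k3 else if x == k3 then k2 else x.

Section Defs.
Variable n : nat.
Implicit Types (M : 'M[KS]_n) (U S : {set 'I_n}).

Definition JM M U : {set 'I_n} :=
  [set j | ksum [seq M i j | i <- enum U] == k1].

Definition rS M S (i : 'I_n) : KS := ksum [seq M i j | j <- enum S].

Definition symdiff U S : {set 'I_n} := (U :\: S) :|: (S :\: U).

Definition spinc M S : Prop :=
  forall U : {set 'I_n},
    odd #|symdiff (JM M U) U :&: S| = odd 'C(#|U|, 2).

Definition distinguished M : Prop :=
  (forall i, M i i = k1) /\
  (forall i j, i != j -> M i j = k2 \/ M i j = k3).

(* action of g = (eps, s) in C_2 wr S_n: first conjugate the columns k with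
   eps k = true, then conjugate by the permutation matrix of s, so that
   entry (a,b) moves to (s a, s b). *)
Definition act_mx (eps : {ffun 'I_n -> bool}) (s : 'S_n) M : 'M[KS]_n :=
  \matrix_(i, j)
    (let a := (s^-1)%g i in let b := (s^-1)%g j in
     if eps b then kconj (M a b) else M a b).

Definition act_set (s : 'S_n) S : {set 'I_n} := s @: S.

(* standard form of a spin^c pair (indices are 0-based here) *)
Definition standard_form M S : Prop :=
  spinc M S /\
  S = [set i : 'I_n | i < #|S|] /\
  (forall i j : 'I_n, val i = 0 ->
                 M i j = (if val j == 0 then k1 else k2)) /\
  distinguished M /\
  exists k l : nat,
    l <= k /\ k + l = #|S| /\
    (* (iii) block form: off-diagonal blocks between A and B are all 2 *)
    (forall i j : 'I_n, i < k -> k <= j < k + l -> M i j = k2 /\ M j i = k2) /\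
    (forall i j : 'I_n, i < k -> j < k -> M j i = kconj (M i j)) /\
    (forall i j : 'I_n, k <= i < k + l -> k <= j < k + l ->
        M j i = kconj (M i j)) /\
    (forall i j : 'I_n, i < k -> j < k -> rS M S i = rS M S j) /\
    (forall i j : 'I_n, k <= i < k + l -> k <= j < k + l ->
        rS M S i = rS M S j) /\
    (forall i j : 'I_n, i < k -> k <= j < k + l -> rS M S i <> rS M S j).

End Defs.

(* Main.v *)
Set Warnings "-all".
From HB Require Import structures.
Require Import Defs.
From mathcomp Require Import all_boot all_order all_algebra all_fingroup.
From mathcomp Require Import zify.
Set Implicit Arguments. Unset Strict Implicit. Unset Printing Implicit Defensive.

Ltac dK x := let H := fresh in case: x => [[|[|[|[|x]]]] H] //.
Lemma kaddn_lt a b : kaddn a b < 4.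
Proof. rewrite /kaddn; by case: (_ (+) _); case: (_ (+) _). Qed.
Lemma kaddE x y : val (kadd x y) = kaddn x y.
Proof. rewrite /kadd; apply: inordK; exact: kaddn_lt. Qed.
Lemma kaddA : associative kadd.
Proof. move=> x y z; apply: val_inj; rewrite /= !kaddE. dK x; dK y; dK z. Qed.
Lemma kaddC : commutative kadd.
Proof. move=> x y; apply: val_inj; rewrite /= !kaddE. dK x; dK y. Qed.
Lemma kadd0 : left_id k0 kadd.
Proof. move=> x; apply: val_inj; rewrite /= !kaddE. dK x. Qed.
HB.instance Definition _ := Monoid.isComLaw.Build KS k0 kadd kaddA kaddC kadd0.

Lemma kconj_val z : val (kconj z) = (if val z == 2 then 3 else if val z == 3 then 2 else val z).
Proof. rewrite /kconj; dK z. Qed.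
Lemma kconjD x y : kconj (kadd x y) = kadd (kconj x) (kconj y).
Proof.
apply: val_inj; rewrite /= kconj_val !kaddE !kconj_val; dK x; dK y.
Qed.
Lemma kconj0 : kconj k0 = k0. Proof. by []. Qed.
Lemma kconj_eq1 x : (kconj x == k1) = (x == k1).
Proof. rewrite /kconj; dK x. Qed.

Definition cj (b : bool) (x : KS) := if b then kconj x else x.
Lemma cjD b x y : cj b (kadd x y) = kadd (cj b x) (cj b y).
Proof. by case: b => //=; rewrite kconjD. Qed.
Lemma cj0 b : cj b k0 = k0. Proof. by case: b. Qed.
Lemma cj_eq1 b x : (cj b x == k1) = (x == k1).
Proof. by case: b => //=; rewrite kconj_eq1. Qed.

Lemma ksumE (I : finType) (A : {pred I}) (F : I -> KS) :
  ksum [seq F i | i <- enum A] = \big[kadd/k0]_(i in A) F i.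
Proof. rewrite -big_enum; elim: (enum A) => [|x s IH]; by rewrite ?big_nil ?big_cons //= IH. Qed.

Section Act.
Variable n : nat.
Implicit Types (M : 'M[KS]_n) (U S : {set 'I_n}).
Variables (eps : {ffun 'I_n -> bool}) (s : 'S_n).

Lemma actE M i j : act_mx eps s M i j = cj (eps (s^-1 j)%g) (M (s^-1 i)%g (s^-1 j)%g).
Proof. by rewrite /act_mx mxE. Qed.

Lemma actE' M i j : act_mx eps s M (s i) (s j) = cj (eps j) (M i j).
Proof. by rewrite actE !permK. Qed.

Lemma surjs (j : 'I_n) : exists j0, j = s j0.
Proof. by exists (s^-1 j)%g; rewrite permKV. Qed.

Lemma JM_act M U : JM (act_mx eps s M) (s @: U) = s @: JM M U.
Proof.
apply/setP => j; have [j0 ->] := surjs j.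
rewrite mem_imset; last exact: perm_inj.
rewrite !inE !ksumE big_imset /=; last by move=> ? ? _ _; apply: perm_inj.
under eq_bigr => i _ do rewrite actE'.
by rewrite -(big_morph (cj (eps j0)) (cjD (eps j0)) (cj0 (eps j0))) cj_eq1.
Qed.

Lemma card_act (A U S : {set 'I_n}) : #|symdiff (s @: A) (s @: U) :&: s @: S| = #|symdiff A U :&: S|.
Proof.
have -> : symdiff (s @: A) (s @: U) :&: s @: S = s @: (symdiff A U :&: S).
  apply/setP => j; have [j0 ->] := surjs j.
  by rewrite /symdiff !inE !mem_imset ?inE //; apply: perm_inj.
by rewrite card_imset //; apply: perm_inj.
Qed.

Lemma imset_inv U : U = s @: ((s^-1)%g @: U).
Proof.
apply/setP => j; have [j0 ->] := surjs j.
rewrite mem_imset; last exact: perm_inj.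
by rewrite -{2}(permK s j0) mem_imset //; apply: perm_inj.
Qed.

Lemma spinc_act M S : spinc M S -> spinc (act_mx eps s M) (s @: S).
Proof.
move=> H U; rewrite (imset_inv U) JM_act card_act H !card_imset //; apply: perm_inj.
Qed.

Lemma hyp_act M S :
  (forall U, U \subset S -> #|U| = 3 -> JM M U != set0) ->
  (forall U, U \subset s @: S -> #|U| = 3 -> JM (act_mx eps s M) U != set0).
Proof.
move=> H U; rewrite (imset_inv U) JM_act card_imset; last exact: perm_inj.
move=> sub c3; have: JM M ((s^-1)%g @: U) != set0.
  apply: H c3; apply/subsetP => x Hx.
  have := subsetP sub (s x).
  rewrite (mem_imset _ _ (@perm_inj _ s)) (mem_imset _ _ (@perm_inj _ s)).
  by apply.
by apply: contra => /eqP E; rewrite -(imset_eq0 s) E.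
Qed.

Lemma dist_act M : distinguished M -> distinguished (act_mx eps s M).
Proof.
case=> H1 H2; split.
  move=> i; have [i0 ->] := surjs i; by rewrite actE' H1; case: (eps i0).
move=> i j; have [i0 ->] := surjs i; have [j0 ->] := surjs j.
rewrite actE' (inj_eq (@perm_inj _ s)) => /H2.
by case: (eps j0) => //= [[]->]; [right|left].
Qed.
End Act.

Definition offd (x : KS) := (x == k2) || (x == k3).
Lemma F_pair1 p : offd p -> (kadd k1 p == k1) = false.
Proof. rewrite /offd -?val_eqE /= ?kaddE; dK p. Qed.
Lemma F_pair2 p : offd p -> (kadd p k1 == k1) = false.
Proof. rewrite /offd -?val_eqE /= ?kaddE; dK p. Qed.
Lemma F_pair3 q : (kadd k2 q == k1) = (q == k3).
Proof. rewrite -!val_eqE /= ?kaddE; dK q. Qed.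
Lemma F_tri0 p q r : offd p -> offd q -> offd r -> (kadd p (kadd q r) == k1) = false.
Proof. rewrite /offd -?val_eqE /= ?kaddE; dK p; dK q; dK r. Qed.
Lemma F_tri1 p q : offd p -> offd q -> (kadd k1 (kadd p q) == k1) = (p == q).
Proof. rewrite /offd -?val_eqE /= ?kaddE; dK p; dK q. Qed.
Lemma F_tri2 p q : offd p -> offd q -> (kadd p (kadd k1 q) == k1) = (p == q).
Proof. rewrite /offd -?val_eqE /= ?kaddE; dK p; dK q. Qed.
Lemma F_tri3 p q : offd p -> offd q -> (kadd p (kadd q k1) == k1) = (p == q).
Proof. rewrite /offd -?val_eqE /= ?kaddE; dK p; dK q. Qed.

Section Core.
Variable n : nat.
Implicit Types (M : 'M[KS]_n) (U S : {set 'I_n}).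

Lemma dist_off M i j : distinguished M -> i != j -> offd (M i j).
Proof. by case=> _ H /H; rewrite /offd => [[]->]; rewrite eqxx ?orbT. Qed.

Lemma JM2 M u v j : u != v ->
  (j \in JM M [set u; v]) = (kadd (M u j) (M v j) == k1).
Proof.
move=> uv; rewrite inE ksumE big_setU1 ?big_set1 //=.
by rewrite inE.
Qed.

Definition T3 (x y z : 'I_n) : {set 'I_n} := x |: (y |: [set z]).

Lemma JM3 M x y z j : x != y -> x != z -> y != z ->
  (j \in JM M (T3 x y z)) = (kadd (M x j) (kadd (M y j) (M z j)) == k1).
Proof.
move=> xy xz yz; rewrite inE ksumE /T3 big_setU1 /=; last by rewrite !inE negb_or xy xz.
by rewrite big_setU1 ?big_set1 // inE.
Qed.

Lemma card_T3 x y z : x != y -> x != z -> y != z -> #|T3 x y z| = 3.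
Proof.
move=> xy xz yz; rewrite /T3 !cardsU1 cards1 !inE negb_or xy xz yz.
by [].
Qed.

Lemma pair_lemma M S u v : distinguished M -> spinc M S -> u \in S -> v \in S -> u != v ->
  odd #|JM M [set u; v] :&: S|.
Proof.
move=> dM sp uS vS uv.
have := sp [set u; v]; rewrite cards2 uv /=.
have -> : symdiff (JM M [set u; v]) [set u; v] :&: S = (JM M [set u; v] :&: S) :|: [set u; v].
  apply/setP => j; rewrite /symdiff !(in_setU, in_setD, in_setI, in_set1) JM2 //.
  case: (eqVneq j u) => [->|ju].
    rewrite (negbTE uv) (dM.1 u) F_pair1 ?uS ?orbT //; apply: (dist_off dM); by rewrite eq_sym.
  case: (eqVneq j v) => [->|jv].
    rewrite (dM.1 v) F_pair2 ?vS ?orbT ?andbT //; exact: (dist_off dM).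
  by case: (kadd _ _ == k1); case: (j \in S).
rewrite cardsU cards2 uv.
have -> : JM M [set u; v] :&: S :&: [set u; v] = set0.
  apply/setP => j; rewrite !(in_setU, in_setD, in_setI, in_set1, in_set0) JM2 //.
  case: (eqVneq j u) => [->|ju].
    rewrite (dM.1 u) F_pair1 //; apply: (dist_off dM); by rewrite eq_sym.
  case: (eqVneq j v) => [->|jv].
    rewrite (dM.1 v) F_pair2 ?andbF //; exact: (dist_off dM).
  by case: (kadd _ _ == k1); case: (j \in S).
by rewrite cards0 subn0 addn2 /=; case: (odd _).
Qed.

Lemma triple_lemma M S x y z : distinguished M -> spinc M S ->
  (forall U, U \subset S -> #|U| = 3 -> JM M U != set0) ->
  x \in S -> y \in S -> z \in S -> x != y -> x != z -> y != z ->
  (M y x == M z x) + (M x y == M z y) + (M x z == M y z) = 2.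
Proof.
move=> dM sp hy xS yS zS xy xz yz.
set U := T3 x y z.
have US : U \subset S by apply/subsetP => j; rewrite !inE => /or3P [] /eqP ->.
have of1 : forall i j, i != j -> offd (M i j) by move=> i j; exact: dist_off.
have zx : z != x by rewrite eq_sym.
have zy : z != y by rewrite eq_sym.
have yx' : y != x by rewrite eq_sym.
have JU : forall j, j \in JM M U -> j \in U.
  move=> j; apply: contraTT; rewrite /U /T3 !in_setU1 in_set1 !negb_or => /and3P [jx jy jz].
  rewrite JM3 // F_tri0 //; apply: of1; by rewrite eq_sym.
have Jx : (x \in JM M U) = (M y x == M z x).
  by rewrite JM3 // (dM.1 x) F_tri1 //; apply: of1.
have Jy : (y \in JM M U) = (M x y == M z y).
  by rewrite JM3 // (dM.1 y) F_tri2 //; apply: of1.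
have Jz : (z \in JM M U) = (M x z == M y z).
  by rewrite JM3 // (dM.1 z) F_tri3 //; apply: of1.
have := sp U; rewrite card_T3 //=.
have -> : symdiff (JM M U) U :&: S = U :\: JM M U.
  apply/setP => j; rewrite /symdiff in_setI in_setU !in_setD.
  case jU: (j \in U).
    by rewrite (subsetP US _ jU) /= !andbT.
  rewrite /= !andbF orbF; case jJ: (j \in JM M U) => //=; move: (JU _ jJ); by rewrite jU.
have -> : #|U :\: JM M U| = \sum_(j in U) (j \notin JM M U).
  rewrite -sum1_card big_mkcond [RHS]big_mkcond /=; apply: eq_bigr => j _.
  by rewrite in_setD; case: (j \in U); case: (j \in JM M U).
rewrite /U /T3 big_setU1 /=; last by rewrite !inE negb_or xy xz.
rewrite big_setU1 ?big_set1 /=; last by rewrite inE.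
rewrite -/U Jx Jy Jz.
have := hy U US (card_T3 xy xz yz); case/set0Pn => j Hj.
have := JU _ Hj; rewrite /U /T3 !in_setU1 in_set1 => /or3P [] /eqP Ej; move: Hj;
  rewrite Ej ?Jx ?Jy ?Jz; case: (M y x == M z x); case: (M x y == M z y); case: (M x z == M y z).
all: by [].
Qed.

End Core.

Section Core2.
Variable n : nat.
Implicit Types (M : 'M[KS]_n) (U S : {set 'I_n}).

Lemma core M S x0 : distinguished M -> spinc M S ->
  (forall U, U \subset S -> #|U| = 3 -> JM M U != set0) ->
  x0 \in S -> (forall j, j != x0 -> M x0 j = k2) -> S \subset [set x0].
Proof.
move=> dM sp hy x0S row.
pose N v := JM M [set x0; v] :&: S.
have Nmem : forall v j, v != x0 -> (j \in N v) = [&& j \in S, j != x0 & M v j == k3].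
  move=> v j vx; rewrite in_setI JM2; last by rewrite eq_sym.
  case: (eqVneq j x0) => [->|jx].
    by rewrite (dM.1 x0) F_pair1 ?andbF //; apply: (dist_off dM).
  by rewrite row // F_pair3 andbC.
have Nodd : forall v, v \in S -> v != x0 -> odd #|N v|.
  move=> v vS vx; apply: pair_lemma => //; by rewrite eq_sym.
have F2 : forall v w, v \in S -> w \in S -> v != x0 -> w != x0 -> v != w ->
    M v w = k3 -> M w v = k2.
  move=> v w vS wS vx wx vw Mvw.
  have := triple_lemma dM sp hy x0S vS wS; rewrite eq_sym vx eq_sym wx vw.
  rewrite !row // Mvw /=.
  move=> /(_ isT isT isT).
  by case: (M v x0 == M w x0); case: (k2 =P M w v) => // <-.
have F3 : forall v w u, v \in S -> w \in S -> u \in S -> v != x0 -> w != x0 -> u != x0 ->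
    v != w -> w != u -> v != u -> M v w = k3 -> M w u = k3 -> M v u = k3.
  move=> v w u vS wS uS vx wx ux vw wu vu Mvw Mwu.
  have Muw := F2 w u wS uS wx ux wu Mwu.
  have := triple_lemma dM sp hy vS wS uS vw vu wu; rewrite Mvw Muw Mwu /=.
  by case: (M w v == M u v); case: (M v u =P k3).
apply/subsetP => v vS; rewrite in_set1; apply/negPn/negP => vx.
have Pv : (v \in S) && (v != x0) by rewrite vS vx.
case: (@arg_minnP _ v (fun v => (v \in S) && (v != x0)) (fun v => #|N v|) Pv) => v' /andP [v'S v'x] Hmin.
have od := Nodd v' v'S v'x.
have : 0 < #|N v'| by move: od; case: #|N v'|.
case/card_gt0P => w; rewrite Nmem // => /and3P [wS wx /eqP Mv'w].
have v'w : v' != w by apply/eqP => E; move: Mv'w; rewrite -E (dM.1 v').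
have Mwv' := F2 v' w v'S wS v'x wx v'w Mv'w.
have sub : N w \subset N v' :\ w.
  apply/subsetP => u; rewrite Nmem // => /and3P [uS ux /eqP Mwu].
  have wu : w != u by apply/eqP => E; move: Mwu; rewrite -E (dM.1 w).
  have v'u : v' != u by apply/eqP => E; move: Mwu; rewrite -E Mwv'.
  rewrite in_setD1 eq_sym wu Nmem // uS ux /=.
  by rewrite (F3 v' w u v'S wS uS v'x wx ux v'w wu v'u Mv'w Mwu).
have := subset_leq_card sub; have := Hmin w; rewrite wS wx => /(_ isT).
have wN : w \in N v' by rewrite Nmem // wS wx Mv'w.
rewrite (cardsD1 w (N v')) wN /=. lia.
Qed.

End Core2.

Theorem mainTheorem14 (n : nat) (M : 'M[KS]_n) (S : {set 'I_n}) :
  3 <= n -> odd n ->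
  distinguished M ->
  spinc M S ->
  (forall U : {set 'I_n}, U \subset S -> #|U| = 3 -> JM M U != set0) ->
  exists (eps : {ffun 'I_n -> bool}) (s : 'S_n),
    standard_form (act_mx eps s M) (act_set s S).
Proof.
move=> n3 _ dM sp hy.
have n0 : 0 < n by lia.
have n1 : 1 < n by lia.
pose z : 'I_n := Ordinal n0.
case: (set_0Vmem S) => [S0|[x0 x0S]].
  pose a : 'I_n := Ordinal n1.
  have az : z != a by [].
  have := sp [set z; a]; rewrite S0 setI0 cards0 cards2 az.
  by [].
pose eps := [ffun j => M x0 j == k3].
pose s := tperm x0 z.
set M' := act_mx eps s M.
have sx0 : s x0 = z by rewrite /s tpermL.
have dM' : distinguished M' by apply: dist_act.
have sp' : spinc M' (s @: S) by apply: spinc_act.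
have hy' := @hyp_act _ eps s _ _ hy.
have row : forall j, j != z -> M' z j = k2.
  move=> j; have [j0 ->] := surjs s j; rewrite -sx0 (inj_eq (@perm_inj _ s)) => jx.
  rewrite /M' actE' /eps ffunE.
  have := dist_off dM (jx : j0 != x0); rewrite eq_sym in jx; have := dist_off dM jx; rewrite /offd => H _.
  move: H.
  by case/orP => /eqP ->.
have zS : z \in s @: S by rewrite -sx0 imset_f.
have sub := core dM' sp' hy' zS row.
have S'E : s @: S = [set z].
  apply/eqP; rewrite eqEsubset sub /=; apply/subsetP => j; rewrite in_set1 => /eqP ->; exact: zS.
have iz : forall i : 'I_n, i < 1 -> i = z by move=> i hi; apply: val_inj => /=; lia.
exists eps, s; rewrite /act_set -/M' S'E /standard_form cards1.
split; first by rewrite -S'E.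
split.
  apply/setP => i; rewrite !inE; apply/eqP/idP => [->//|/iz //].
split.
  move=> i j i0; have -> : i = z by apply: val_inj.
  case: eqP => [j0|jn].
    have -> : j = z by apply: val_inj.
    exact: dM'.1.
  by apply: row; apply/eqP => E; apply: jn; rewrite E.
split; first exact: dM'.
exists 1, 0.
split; first by [].
split; first by [].
split; first by move=> i j _; lia.
split.
  by move=> i j /iz -> /iz ->; rewrite dM'.1.
split; first by move=> i j; lia.
split.
  by move=> i j /iz -> /iz ->.
split; first by move=> i j; lia.
by move=> i j _; lia.
Qed.
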